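(* Every $(F,G)\in\mathcal F^{(1)}$ is a $1$-uniform dual pair; that is, $\langle f_i,g_i\rangle=\frac nN$ for all $1\le i\le N$.
   Context: $\mathcal H$ is a complex Hilbert space of finite dimension $n$, inner product linear in the first argument. A finite sequence $F=\{f_i\}_{i=1}^N$ in $\mathcal H$ is a frame if there are constants $0<A\le B$ with $A\|f\|^2\le\sum_{i=1}^N|\langle f,f_i\rangle|^2\le B\|f\|^2$ for all $f$. A sequence $G=\{g_i\}_{i=1}^N$ is a dual of $F$ if $f=\sum_{i=1}^N\langle f,g_i\rangle f_i$ for all $f$; then $(F,G)$ is an $(N,n)$ dual pair. A dual pair is $1$-uniform if $\langle f_i,g_i\rangle$ is independent of $i$. The error operator for $\Lambda\subseteq\{1,\dots,N\}$ is $E_{\Lambda,F,G}f=\sum_{i\in\Lambda}\langle f,f_i\rangle g_i$. With $\|T\|_{\mathcal F}=\sqrt{\operatorname{tr}(T^*T)}$, $\epsilon^{(1)}_{F,G}=\max_{1\le i\le N}\|E_{\{i\},F,G}\|_{\mathcal F}$, $\epsilon^{(1)}=\inf\{\epsilon^{(1)}_{F,G}:(F,G)\text{ an }(N,n)\text{ dual pair}\}$, $\mathcal F^{(1)}=\{(F,G):\epsilon^{(1)}_{F,G}=\epsilon^{(1)}\}$. *)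

(* Defs.v *)
From HB Require Import structures.
From mathcomp Require Import all_boot all_order all_algebra.
From mathcomp Require Import reals.
From mathcomp Require Import complex.
Set Implicit Arguments. Unset Strict Implicit. Unset Printing Implicit Defensive.
Import Order.TTheory GRing.Theory Num.Theory.
Local Open Scope ring_scope.

Section FrameDefs.
Variable R : realType.
Local Notation C := (R[i]).
Variables (n N : nat).

(* The n-dimensional complex Hilbert space is modelled as column vectors
   'cV[C]_n with the standard inner product, linear in the first argument. *)
Definition inner (x y : 'cV[C]_n) : C := \sum_(k < n) x k 0 * Num.conj (y k 0).

Definition adjmx m p (A : 'M[C]_(m, p)) : 'M[C]_(p, m) := (map_mx Num.conj A)^T.

Definition is_frame (F : 'I_N -> 'cV[C]_n) : Prop :=
  exists A B : R, 0 < A /\ A <= B /\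
    forall f : 'cV[C]_n,
      (A%:C)%C * inner f f <= \sum_(i < N) `|inner f (F i)| ^+ 2 /\
      \sum_(i < N) `|inner f (F i)| ^+ 2 <= (B%:C)%C * inner f f.

Definition is_dual (F G : 'I_N -> 'cV[C]_n) : Prop :=
  forall f : 'cV[C]_n, f = \sum_(i < N) inner f (G i) *: F i.

Definition dual_pair (F G : 'I_N -> 'cV[C]_n) : Prop := is_frame F /\ is_dual F G.

Definition one_uniform (F G : 'I_N -> 'cV[C]_n) : Prop :=
  forall i j : 'I_N, inner (F i) (G i) = inner (F j) (G j).

(* error operator E_{Lambda,F,G} f = sum_{i in Lambda} <f,f_i> g_i, as the
   matrix acting on column vectors: sum_{i in Lambda} g_i f_i^* *)
Definition err_op (F G : 'I_N -> 'cV[C]_n) (L : {set 'I_N}) : 'M[C]_n :=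
  \sum_(i in L) (G i *m adjmx (F i)).

Definition frob (T : 'M[C]_n) : C := sqrtC (\tr (adjmx T *m T)).

(* epsilon^(1)_{F,G} = max_i ||E_{{i},F,G}||_F  (all terms are >= 0) *)
Definition eps1 (F G : 'I_N -> 'cV[C]_n) : C :=
  \big[Num.max/0]_(i < N) frob (err_op F G [set i]).

Definition in_F1 (F G : 'I_N -> 'cV[C]_n) : Prop :=
  dual_pair F G /\
  forall F' G' : 'I_N -> 'cV[C]_n, dual_pair F' G' -> eps1 F G <= eps1 F' G'.

End FrameDefs.

(* Main.v *)
Require Import Defs.
From HB Require Import structures.
From mathcomp Require Import all_boot all_order all_algebra all_fingroup all_solvable all_field.
From mathcomp Require Import reals complex ring zify.
Import Order.TTheory GRing.Theory Num.Theory.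
Local Open Scope ring_scope.
Set Implicit Arguments. Unset Strict Implicit. Unset Printing Implicit Defensive.

Section Aux.
Variable R : realType.
Local Notation C := (R[i]).

Lemma prim_root_ex n : (n > 0)%N -> {z : C | n.-primitive_root z}.
Proof.
pose p : {poly C} := 'X^n - 1; have [r Dp] := closed_field_poly_normal p.
move=> n_gt0; apply/sigW; rewrite (monicP _) ?monicXnsubC // scale1r in Dp.
have rn1: all n.-unity_root r by apply/allP=> z; rewrite -root_prod_XsubC -Dp.
have sz_r: (n < (size r).+1)%N.
  by rewrite -(size_prod_XsubC r id) -Dp size_XnsubC.
have [|z] := hasP (has_prim_root n_gt0 rn1 _ sz_r); last by exists z.
by rewrite -separable_prod_XsubC -Dp separable_Xn_sub_1 // pnatr_eq0 -lt0n.
Qed.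

Lemma CS n (f g : 'I_n -> C) :
  (\sum_k f k * (g k)^*) * (\sum_k f k * (g k)^*)^*
  <= (\sum_k f k * (f k)^*) * (\sum_k g k * (g k)^*).
Proof.
set a := \sum_k f k * (g k)^*.
have Ea : a^* = \sum_k (f k)^* * g k.
  rewrite /a rmorph_sum; apply: eq_bigr => k _; by rewrite rmorphM /= conjCK.
have H : 2 * ((\sum_k f k * (f k)^*) * (\sum_k g k * (g k)^*) - a * a^*) =
  \sum_k \sum_l (f k * g l - f l * g k) * (f k * g l - f l * g k)^*.
  set A := \sum_k f k * (f k)^*. set B := \sum_k g k * (g k)^*.
  have -> : \sum_k \sum_l (f k * g l - f l * g k) * (f k * g l - f l * g k)^* =
    \sum_k ((f k * (f k)^*) * B + (g k * (g k)^*) * A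
       - (f k * (g k)^*) * a^* - ((f k)^* * g k) * a).
    apply: eq_bigr => k _.
    rewrite /A /B Ea /a !mulr_sumr -big_split -sumrB -sumrB /=.
    apply: eq_bigr => l _.
    rewrite rmorphB !rmorphM /=; ring.
  rewrite !sumrB big_split /= -!mulr_suml -Ea.
  rewrite -/A -/B -/a; ring.
have H0 : 0 <= 2 * ((\sum_k f k * (f k)^*) * (\sum_k g k * (g k)^*) - a * a^*).
  by rewrite H; apply: sumr_ge0 => k _; apply: sumr_ge0 => l _; apply: mul_conjC_ge0.
by rewrite -subr_ge0; rewrite pmulr_rge0 // in H0.
Qed.


Variables n N : nat.

Lemma inner_delta (l : 'I_n) (g : 'cV[C]_n) : inner (delta_mx l 0) g = (g l 0)^*.
Proof.
rewrite /inner (bigD1 l) //= big1 ?addr0; first by rewrite mxE !eqxx mul1r.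
by move=> k /negbTE kl; rewrite mxE kl mul0r.
Qed.

Lemma dual_coord (F G : 'I_N -> 'cV[C]_n) : is_dual F G ->
  forall k l : 'I_n, \sum_i F i k 0 * (G i l 0)^* = (k == l)%:R.
Proof.
move=> H k l; have := H (delta_mx l 0) => /(congr1 (fun v : 'cV[C]_n => v k 0)).
rewrite summxE mxE eqxx andbT => ->.
by apply: eq_bigr => i _; rewrite mxE inner_delta mulrC.
Qed.

Lemma dual_trace (F G : 'I_N -> 'cV[C]_n) : is_dual F G ->
  \sum_i inner (F i) (G i) = n%:R.
Proof.
move=> H; rewrite /inner exchange_big /=.
rewrite (eq_bigr (fun _ => 1)); first by rewrite sumr_const card_ord.
by move=> k _; rewrite (dual_coord H) eqxx.
Qed.

Lemma dual_le (F G : 'I_N -> 'cV[C]_n) : is_dual F G -> (n <= N)%N.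
Proof.
move=> H.
pose M : 'M[C]_(n, N) := \matrix_(k, i) F i k 0.
pose P : 'M[C]_(N, n) := \matrix_(i, l) (G i l 0)^*.
have MP : M *m P = 1%:M.
  apply/matrixP => k l; rewrite !mxE -(dual_coord H).
  by apply: eq_bigr => i _; rewrite !mxE.
have := mxrankM_maxl M P; rewrite MP mxrank1 => h.
exact: leq_trans h (rank_leq_col M).
Qed.

Lemma frob1 (F G : 'I_N -> 'cV[C]_n) i :
  frob (err_op F G [set i]) = sqrtC (inner (G i) (G i) * inner (F i) (F i)).
Proof.
rewrite /frob /err_op big_set1; congr sqrtC.
rewrite [X in _ = X]mulrC /mxtrace /inner mulr_suml.
apply: eq_bigr => k _; rewrite mxE mulr_sumr; apply: eq_bigr => l _.
rewrite /adjmx !mxE !big_ord1 !mxE rmorphM /= conjCK.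
have -> : (0 : 'I_1) = ord0 by apply: val_inj.
ring.
Qed.


Section Harm.
Variable w : C.
Hypothesis prim : N.-primitive_root w.
Hypothesis hnN : (n <= N)%N.

Lemma N_gt0 : (0 < N)%N. Proof. exact: prim_order_gt0 prim. Qed.

Lemma w_neq0 : w != 0.
Proof. by rewrite (prim_root_eq0 prim) -lt0n N_gt0. Qed.

Lemma wN : w ^+ N = 1. Proof. exact: prim_expr_order prim. Qed.

Lemma w_conj1 : w * w^* = 1.
Proof.
rewrite -normCK; have h : `|w| ^+ N = 1 by rewrite -normrX wN normr1.
have /eqP -> : `|w| == 1 by rewrite -(pexpr_eq1 N_gt0) ?normr_ge0 // h.
by rewrite expr1n.
Qed.

Lemma w_conj : w^* = w ^+ N.-1.
Proof.
apply: (mulfI w_neq0); rewrite w_conj1 -exprS prednK ?wN //; exact: N_gt0.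
Qed.

Lemma wX_conj1 m : w ^+ m * (w ^+ m)^* = 1.
Proof. by rewrite rmorphXn /= -exprMn w_conj1 expr1n. Qed.

Lemma kern (k l : 'I_n) :
  \sum_(j < N) w ^+ (j * k) * (w ^+ (j * l))^* = (k == l)%:R * N%:R.
Proof.
have kN : (k < N)%N by apply: leq_trans (ltn_ord k) hnN.
have lN : (l < N)%N by apply: leq_trans (ltn_ord l) hnN.
set z := w ^+ (k + N.-1 * l).
have Ez : forall j : 'I_N, w ^+ (j * k) * (w ^+ (j * l))^* = z ^+ j.
  move=> j; rewrite rmorphXn /= w_conj /z -!exprM -exprD; congr (w ^+ _); lia.
rewrite (eq_bigr _ (fun j _ => Ez j)).
case: eqVneq => [kl | kl].
  have z1 : z = 1.
    rewrite /z kl; have -> : (l + N.-1 * l = l * N)%N.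
      have := N_gt0; nia.
    by rewrite exprM -exprM mulnC exprM wN expr1n.
  by rewrite z1 (eq_bigr (fun _ => 1)) ?sumr_const ?card_ord ?mul1r // => j _; rewrite expr1n.
have zn1 : z != 1.
  rewrite /z -(prim_order_dvd prim); apply/negP => /dvdnP [q Hq].
  have : ((k + N.-1 * l + l) %% N = l)%N.
    by rewrite Hq -modnDml modnMl add0n modn_small.
  have -> : (k + N.-1 * l + l = l * N + k)%N.
    have := N_gt0; nia.
  rewrite modnMDl modn_small // => /val_inj kl'; by rewrite kl' eqxx in kl.
have : (z - 1) * \sum_(j < N) z ^+ j = 0.
  by rewrite -subrX1 /z -exprM mulnC exprM wN expr1n subrr.
move/eqP; rewrite mulf_eq0 subr_eq0 (negbTE zn1) /= => /eqP ->.
by rewrite mul0r.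
Qed.


Definition Fh (j : 'I_N) : 'cV[C]_n := \col_(k < n) w ^+ (j * k).
Definition Gh (j : 'I_N) : 'cV[C]_n := (N%:R)^-1 *: Fh j.

Lemma Nne0 : (N%:R : C) != 0.
Proof. by rewrite pnatr_eq0 -lt0n N_gt0. Qed.

Lemma conjNV : ((N%:R : C)^-1)^* = (N%:R)^-1.
Proof. by rewrite fmorphV /= conjC_nat. Qed.

Lemma Gh_dual : is_dual Fh Gh.
Proof.
move=> f; apply/matrixP => k z; rewrite (ord1 z) summxE /=.
have -> : \sum_j (inner f (Gh j) *: Fh j) k ord0 =
   \sum_l f l ord0 * ((N%:R)^-1 * \sum_(j < N) w ^+ (j * k) * (w ^+ (j * l))^*).
  rewrite (eq_bigr (fun j : 'I_N => \sum_l f l ord0 * ((N%:R)^-1 * (w ^+ (j * k) * (w ^+ (j * l))^*)))); last first.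
    move=> j _; rewrite !mxE /inner mulr_suml; apply: eq_bigr => l _.
    rewrite !mxE rmorphM /= conjNV; ring.
  rewrite exchange_big /=; apply: eq_bigr => l _; by rewrite -mulr_sumr -mulr_sumr.
rewrite (bigD1 k) //= [X in _ = _ + X]big1 ?addr0.
  by rewrite kern eqxx mul1r mulVf ?mulr1 // Nne0.
by move=> l /negbTE kl; rewrite kern eq_sym kl mul0r mulr0 mulr0.
Qed.

Lemma Fh_sq (f : 'cV[C]_n) : \sum_j `|inner f (Fh j)| ^+ 2 = N%:R * inner f f.
Proof.
have -> : \sum_j `|inner f (Fh j)| ^+ 2 =
  \sum_(j < N) \sum_k \sum_l f k ord0 * (f l ord0)^* * (w ^+ (j * l) * (w ^+ (j * k))^*).
  apply: eq_bigr => j _; rewrite normCK /inner rmorph_sum big_distrlr /=.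
  apply: eq_bigr => k _; apply: eq_bigr => l _.
  rewrite !mxE rmorphM /= conjCK; ring.
rewrite exchange_big /= /inner mulr_sumr; apply: eq_bigr => k _.
rewrite exchange_big /= (bigD1 k) //= addrC big1 ?add0r.
  by rewrite -mulr_sumr kern eqxx mul1r mulrC.
by move=> l /negbTE kl; rewrite -mulr_sumr kern kl mul0r mulr0.
Qed.

Lemma Fh_frame : is_frame Fh.
Proof.
exists N%:R, N%:R; split; first by rewrite ltr0n N_gt0.
split => // f; rewrite Fh_sq rmorph_nat; split => //.
Qed.

Lemma Fh_frob j : frob (err_op Fh Gh [set j]) = n%:R / N%:R.
Proof.
rewrite frob1.
have hF : inner (Fh j) (Fh j) = n%:R.
  rewrite /inner (eq_bigr (fun _ => 1)) ?sumr_const ?card_ord // => k _.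
  by rewrite !mxE wX_conj1.
have hG : inner (Gh j) (Gh j) = (N%:R)^-1 * (N%:R)^-1 * n%:R.
  rewrite -hF /inner mulr_sumr; apply: eq_bigr => k _.
  rewrite !mxE rmorphM /= conjNV; ring.
rewrite hG hF.
have -> : (N%:R)^-1 * (N%:R)^-1 * n%:R * n%:R = (n%:R / N%:R : C) ^+ 2 by ring.
by rewrite sqrCK // divr_ge0 ?ler0n.
Qed.

End Harm.

End Aux.

Section Max.
Variable R : realType.
Local Notation C := (R[i]).

Lemma max_cases (x y : C) : Num.max x y = x \/ Num.max x y = y.
Proof. rewrite /Order.max; case: ifP; by [right | left]. Qed.

Lemma bigmax_le_c m (e : 'I_m -> C) c : 0 <= c -> (forall i, e i <= c) ->
  \big[Num.max/0]_(i < m) e i <= c.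
Proof.
move=> c0 he; elim/big_ind: _ => // x y hx hy.
by case: (max_cases x y) => ->.
Qed.

Lemma bigmax_ge0 m (e : 'I_m -> C) : (forall i, 0 <= e i) ->
  0 <= \big[Num.max/0]_(i < m) e i.
Proof.
move=> he; elim/big_ind: _ => // x y hx hy.
by case: (max_cases x y) => ->.
Qed.

Lemma le_bigmax m (e : 'I_m -> C) : (forall i, 0 <= e i) ->
  forall i, e i <= \big[Num.max/0]_(j < m) e j.
Proof.
elim: m e => [|m IH] e he i; first by case: i.
rewrite big_ord_recl /=.
set M := \big[Num.max/0]_(j < m) e (lift ord0 j).
have M0 : 0 <= M by apply: bigmax_ge0 => j.
rewrite comparable_le_max; last by apply: real_comparable; apply: ger0_real.
case: (unliftP ord0 i) => [j ->|->]; last by rewrite lexx.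
by rewrite IH ?orbT // => k.
Qed.

End Max.

Theorem corollary3p4 (R : realType) (n N : nat) (F G : 'I_N -> 'cV[R[i]]_n) :
  in_F1 F G ->
  one_uniform F G /\ (forall i : 'I_N, inner (F i) (G i) = n%:R / N%:R).
Proof.
move=> [[frF dualFG] minF].
suff H : forall i : 'I_N, inner (F i) (G i) = n%:R / N%:R.
  by split => // i j; rewrite !H.
have hsum := dual_trace dualFG.
have [n0|npos] := posnP n.
  by subst n => i; rewrite /inner big_ord0 mul0r.
have hnN := dual_le dualFG.
have Npos : (0 < N)%N by apply: leq_trans npos hnN.
have [w prim] := prim_root_ex R Npos.
set c : R[i] := n%:R / N%:R.
have c0 : 0 <= c by rewrite divr_ge0 ?ler0n.
have cc : c^* = c by rewrite /c rmorphM fmorphV /= !conjC_nat.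
have Nc : N%:R * c = n%:R.
  by rewrite /c mulrC -mulrA mulVf ?mulr1 // pnatr_eq0 -lt0n.
have epsh : eps1 (@Fh R n N w) (@Gh R n N w) <= c.
  apply: bigmax_le_c => // j; by rewrite Fh_frob.
have epsF := le_trans (minF _ _ (conj (Fh_frame prim hnN) (Gh_dual prim hnN))) epsh.
have inn0 : forall x : 'cV[R[i]]_n, 0 <= inner x x.
  by move=> x; apply: sumr_ge0 => k _; apply: mul_conjC_ge0.
have e0 : forall i, 0 <= frob (err_op F G [set i]).
  by move=> i; rewrite frob1 sqrtC_ge0 mulr_ge0.
have key : forall i, inner (F i) (G i) * (inner (F i) (G i))^* <= c ^+ 2.
  move=> i; apply: le_trans (CS (fun k => F i k 0) (fun k => G i k 0)) _.
  have hei := le_trans (le_bigmax e0 i) epsF.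
  rewrite frob1 in hei.
  have X0 : 0 <= inner (G i) (G i) * inner (F i) (F i) by rewrite mulr_ge0.
  rewrite mulrC -[X in X <= _](sqrtCK (inner (G i) (G i) * inner (F i) (F i))).
  by rewrite !expr2 ler_pM // sqrtC_ge0.
set a := fun i => inner (F i) (G i).
have hS : \sum_i (c - a i) * (c - a i)^* <= 0.
  apply: (le_trans (y := \sum_i (2 * c ^+ 2 - (c * (a i)^* + a i * c)))).
    apply: ler_sum => i _; rewrite rmorphB /= cc -subr_ge0.
    have -> : 2 * c ^+ 2 - (c * (a i)^* + a i * c) - (c - a i) * (c - (a i)^*)
      = c ^+ 2 - a i * (a i)^* by ring.
    by rewrite subr_ge0; apply: key.
  rewrite sumrB sumr_const card_ord big_split /= -mulr_sumr -mulr_suml.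
  rewrite -rmorph_sum /= hsum conjC_nat.
  have -> : (2 * c ^+ 2) *+ N - (c * n%:R + n%:R * c) = 2 * c * (N%:R * c - n%:R).
    by rewrite -mulr_natl; ring.
  by rewrite Nc subrr mulr0.
have hS0 : \sum_i (c - a i) * (c - a i)^* == 0.
  by rewrite eq_le hS sumr_ge0 // => i _; apply: mul_conjC_ge0.
rewrite psumr_eq0 in hS0; last by move=> i _; apply: mul_conjC_ge0.
move=> i; have := allP hS0 i (mem_index_enum i).
by rewrite /= mul_conjC_eq0 subr_eq0 => /eqP ->.
Qed.
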